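(* Let $K\in\{\mathbb R,\mathbb C,\mathbb H\}$ and let $(E,d)$ be a metric vector space over $K$. Then $d$ is asymptotically isometric to (the distance $\|x-y\|$ of) a norm $\|\cdot\|$ on $E$ if and only if the following three conditions hold: (1) $d$ is asymptotically multiplicative; (2) $d$ is unbounded on every non-trivial linear subspace of $E$; (3) for every $C_1>1$ there exists $C_0\ge0$ such that for every $n\ge2$ and all $x_1,\dots,x_n,y_1,\dots,y_n\in E$, $$d\Big(\sum_{i=1}^n x_i,\sum_{i=1}^n y_i\Big)\le C_1\sum_{i=1}^n d(x_i,y_i)+nC_0.$$ In that case a norm with this property is given by $\|x\|=\lim_{n\to+\infty}\frac1n\int_{\mathbb U}d(nux,0)\,d\mu(u)$.
   Context: $K$ is $\mathbb R$, $\mathbb C$ or $\mathbb H$ with the usual absolute value. A metric vector space $(E,d)$ is a topological vector space over $K$ whose topology is generated by the metric $d$. $\mathbb U=\{u\in K:|u|=1\}$ and $\mu$ is the right-invariant Haar probability measure on $\mathbb U$. A distance $d$ is asymptotically isometric to a distance $\delta$ if for every $C_1>1$ there is $C_2\ge0$ with $C_1^{-1}\delta(x,y)-C_2\le d(x,y)\le C_1\delta(x,y)+C_2$ for all $x,y$. The distance $d$ is asymptotically multiplicative if for every $C_1>1$ there exist $C_2\ge0$, $C_3\ge0$ such that for all $\lambda\in K$ and $x,y\in E$: $C_1^{-1}|\lambda|d(x,y)-C_2|\lambda|-C_3\le d(\lambda x,\lambda y)\le C_1|\lambda|d(x,y)+C_2|\lambda|+C_3$. $d$ is unbounded on a subspace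 $V$ if $\sup_{x,y\in V}d(x,y)=\infty$. *)

(* Defs.v *)
From HB Require Import structures.
From mathcomp Require Import all_boot all_order all_algebra.
From mathcomp Require Import all_classical all_reals all_analysis.
From mathcomp Require Import complex ring.

Set Implicit Arguments.
Unset Strict Implicit.
Unset Printing Implicit Defensive.
Import Order.TTheory GRing.Theory Num.Theory.
Local Open Scope classical_set_scope.
Local Open Scope ring_scope.
Local Open Scope complex_scope.

Definition cabs (R : realType) (z : R[i]) : R :=
  let: a +i* b := z in Num.sqrt (a ^+ 2 + b ^+ 2).

(* Hamilton's quaternions a + b i + c j + d k *)
Record quat (R : Type) := Quat { q0 : R; q1 : R; q2 : R; q3 : R }.

Section Quaternions.
Variable R : realType.

Definition quat_to (q : quat R) : R * R * R * R := (q0 q, q1 q, q2 q, q3 q).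
Definition quat_of (p : R * R * R * R) : quat R :=
  let: (a, b, c, d) := p in Quat a b c d.
Lemma quat_toK : cancel quat_to quat_of. Proof. by case. Qed.

HB.instance Definition _ := Equality.copy (quat R) (can_type quat_toK).
HB.instance Definition _ := Choice.copy (quat R) (can_type quat_toK).

Definition qzero : quat R := Quat 0 0 0 0.
Definition qopp (x : quat R) : quat R := Quat (- q0 x) (- q1 x) (- q2 x) (- q3 x).
Definition qadd (x y : quat R) : quat R :=
  Quat (q0 x + q0 y) (q1 x + q1 y) (q2 x + q2 y) (q3 x + q3 y).

Lemma qaddA : associative qadd.
Proof. by case=> ? ? ? ? [] ? ? ? ? [] ? ? ? ?; rewrite /qadd /= !addrA. Qed.
Lemma qaddC : commutative qadd.
Proof.
by case=> ? ? ? ? [] ? ? ? ?; rewrite /qadd /=; congr Quat; rewrite addrC.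
Qed.
Lemma qadd0 : left_id qzero qadd.
Proof. by case=> ? ? ? ?; rewrite /qadd /= !add0r. Qed.
Lemma qaddN : left_inverse qzero qopp qadd.
Proof. by case=> ? ? ? ?; rewrite /qadd /= !addNr. Qed.

HB.instance Definition _ := GRing.isZmodule.Build (quat R) qaddA qaddC qadd0 qaddN.

Definition qone : quat R := Quat 1 0 0 0.
Definition qmul (x y : quat R) : quat R :=
  let: Quat a1 b1 c1 d1 := x in let: Quat a2 b2 c2 d2 := y in
  Quat (a1 * a2 - b1 * b2 - c1 * c2 - d1 * d2)
       (a1 * b2 + b1 * a2 + c1 * d2 - d1 * c2)
       (a1 * c2 - b1 * d2 + c1 * a2 + d1 * b2)
       (a1 * d2 + b1 * c2 - c1 * b2 + d1 * a2).

Lemma qmulA : associative qmul.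
Proof. by case=> ? ? ? ? [] ? ? ? ? [] ? ? ? ?; rewrite /qmul; congr Quat; ring. Qed.
Lemma qmul1 : left_id qone qmul.
Proof. by case=> ? ? ? ?; rewrite /qmul; congr Quat; ring. Qed.
Lemma qmulr1 : right_id qone qmul.
Proof. by case=> ? ? ? ?; rewrite /qmul; congr Quat; ring. Qed.
Lemma qmulDl' : left_distributive qmul qadd.
Proof.
by case=> ? ? ? ? [] ? ? ? ? [] ? ? ? ?; rewrite /qmul /qadd /=; congr Quat; ring.
Qed.
Lemma qmulDr' : right_distributive qmul qadd.
Proof.
by case=> ? ? ? ? [] ? ? ? ? [] ? ? ? ?; rewrite /qmul /qadd /=; congr Quat; ring.
Qed.
Lemma qmulDl : left_distributive qmul +%R. Proof. exact: qmulDl'. Qed.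
Lemma qmulDr : right_distributive qmul +%R. Proof. exact: qmulDr'. Qed.
Lemma qone_neq0 : qone != 0.
Proof. by apply/eqP => -[]; apply/eqP; rewrite oner_eq0. Qed.

HB.instance Definition _ :=
  GRing.Zmodule_isNzRing.Build (quat R) qmulA qmul1 qmulr1 qmulDl qmulDr qone_neq0.

Definition qabs (x : quat R) : R :=
  Num.sqrt (q0 x ^+ 2 + q1 x ^+ 2 + q2 x ^+ 2 + q3 x ^+ 2).

End Quaternions.

Section Generic.
Variables (R : realType) (K : nzRingType) (absK : K -> R).

(* K seen as a measurable space with its Borel sigma-algebra (generated by
   the open balls of the metric (a, b) |-> absK (a - b)). *)
Definition Kpt : Type := K.
HB.instance Definition _ := Choice.on Kpt.
HB.instance Definition _ := isPointed.Build Kpt (0 : K).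
Definition Kballs : set (set Kpt) :=
  [set B | exists (c : K) (r : R), B = [set z : K | absK (z - c) < r]].
Definition Kmeas : Type := g_sigma_algebraType Kballs.

Definition Uset : set Kmeas := [set u : K | absK u = 1].

(* mu is the right-invariant Haar probability measure on U (viewed as a
   probability measure on K concentrated on U) *)
Definition is_Haar_U (mu : probability Kmeas R) : Prop :=
  mu Uset = 1%E /\
  forall (A : set Kmeas), measurable A -> forall u : K, absK u = 1 ->
    mu [set (a : K) * u | a in A] = mu A.

Section OnE.
Variables (E : lmodType K) (d : E -> E -> R).

Definition is_distance : Prop :=
  (forall x y, d x y = 0 <-> x = y) /\
  (forall x y, d x y = d y x) /\
  (forall x y z, d x z <= d x y + d y z).

Definition metric_vector_space : Prop :=
  is_distance /\
  (forall (x y : E) (e : R), 0 < e -> exists2 r : R, 0 < r &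
     forall x' y', d x' x < r -> d y' y < r -> d (x' + y') (x + y) < e) /\
  (forall (a : K) (x : E) (e : R), 0 < e -> exists2 r : R, 0 < r &
     forall (a' : K) (x' : E), absK (a' - a) < r -> d x' x < r ->
       d (a' *: x') (a *: x) < e).

Definition is_norm (N : E -> R) : Prop :=
  (forall x, N x = 0 -> x = 0) /\
  (forall (a : K) x, N (a *: x) = absK a * N x) /\
  (forall x y, N (x + y) <= N x + N y).

Definition asymp_isometric_to_norm (N : E -> R) : Prop :=
  forall C1 : R, 1 < C1 -> exists C2 : R, 0 <= C2 /\
    forall x y, C1^-1 * N (x - y) - C2 <= d x y /\
                d x y <= C1 * N (x - y) + C2.

Definition asymp_multiplicative : Prop :=
  forall C1 : R, 1 < C1 -> exists C2 C3 : R, 0 <= C2 /\ 0 <= C3 /\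
    forall (l : K) (x y : E),
      C1^-1 * absK l * d x y - C2 * absK l - C3 <= d (l *: x) (l *: y) /\
      d (l *: x) (l *: y) <= C1 * absK l * d x y + C2 * absK l + C3.

Definition is_subspace (V : set E) : Prop :=
  V 0 /\ forall (a : K) u v, V u -> V v -> V (a *: u + v).

Definition unbounded_on_subspaces : Prop :=
  forall V : set E, is_subspace V -> (exists v, V v /\ v <> 0) ->
    forall M : R, exists x y, V x /\ V y /\ M < d x y.

Definition sum_condition : Prop :=
  forall C1 : R, 1 < C1 -> exists C0 : R, 0 <= C0 /\
    forall n : nat, (2 <= n)%N -> forall x y : 'I_n -> E,
      d (\sum_(i < n) x i) (\sum_(i < n) y i)
        <= C1 * (\sum_(i < n) d (x i) (y i)) + n%:R * C0.

Definition haar_limit (mu : probability Kmeas R) (N : E -> R) : Prop :=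
  forall x : E,
    (fun n : nat => (((n%:R)^-1)%:E *
        \int[mu]_(u in Uset) (d ((n%:R * (u : K)) *: x) 0)%:E)%E)
      @ \oo --> (N x)%:E.

End OnE.

Definition theorem3_for : Prop :=
  forall (E : lmodType K) (d : E -> E -> R), metric_vector_space d ->
    ((exists N : E -> R, is_norm N /\ asymp_isometric_to_norm d N) <->
       [/\ asymp_multiplicative d, unbounded_on_subspaces d & sum_condition d])
    /\
    (asymp_multiplicative d -> unbounded_on_subspaces d -> sum_condition d ->
       forall mu : probability Kmeas R, is_Haar_U mu ->
         exists N : E -> R, [/\ is_norm N, asymp_isometric_to_norm d N &
                                haar_limit d mu N]).

End Generic.

(* Main.v *)
Require Import Defs.
From HB Require Import structures.
From mathcomp Require Import all_boot all_order all_algebra.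
From mathcomp Require Import all_classical all_reals all_analysis.
From mathcomp Require Import complex ring lra.
Import Order.TTheory GRing.Theory Num.Theory.
Local Open Scope ring_scope.
Local Open Scope classical_set_scope.
Section RealAux.
Variable R : realType.

Lemma le_eps (X Y K : R) : 0 <= K -> (forall e : R, 0 < e -> X <= Y + K * e) -> X <= Y.
Proof.
move=> K0 H; apply/ler_addgt0Pr => e e0.
have K1 : 0 < K + 1 by lra.
apply: (le_trans (H (e / (K + 1)) _)); first exact: divr_gt0.
rewrite lerD2l mulrA ler_pdivrMr //; nra.
Qed.

Lemma le_c (X Y : R) : 0 <= Y -> (forall c : R, 1 < c -> X <= c * Y) -> X <= Y.
Proof.
move=> Y0 H; apply/ler_addgt0Pr => e e0.
have Y1 : 0 < Y + 1 by lra.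
have h : 0 < e / (Y + 1) by exact: divr_gt0.
apply: (le_trans (H (1 + e / (Y + 1)) _)); first lra.
rewrite mulrDl mul1r lerD2l mulrAC ler_pdivrMr //; nra.
Qed.

Lemma ev_small (err e : R) : 0 <= err -> 0 < e ->
  exists m, forall n, (m <= n)%N -> err / n.+1%:R <= e.
Proof.
move=> err0 e0; exists (Num.truncn (err / e)) => n mn.
rewrite ler_pdivrMr ?ltr0Sn // mulrC -ler_pdivrMr //.
apply/ltW/(lt_le_trans (truncnS_gt _)); rewrite ler_nat ltnS //.
Qed.

Lemma sqrt_split (C1 : R) : 1 < C1 -> exists c : R, 1 < c /\ c * c = C1.
Proof.
move=> C11; exists (Num.sqrt C1); have h := sqr_sqrtr (ltW (lt_trans ltr01 C11)).
rewrite expr2 in h; split => //.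
have s0 := sqrtr_ge0 C1; rewrite ltNge; apply/negP => hs; nra.
Qed.

Definition LS (u : nat -> R) : R :=
  inf [set sup [set u k | k in [set k | (m <= k)%N]] | m in [set: nat]].

Section LSlemmas.
Variables (u : nat -> R) (B : R).
Hypothesis u0 : forall n, 0 <= u n.
Hypothesis uB : forall n, u n <= B.

Let S m := [set u k | k in [set k | (m <= k)%N]].
Let T := [set sup (S m) | m in [set: nat]].

Let S_ne m : S m !=set0. Proof. by exists (u m); exists m => /=. Qed.
Let S_ub m : has_ubound (S m). Proof. by exists B => _ [k _ <-]. Qed.
Let S_sup m : has_sup (S m). Proof. by split; [exact: S_ne | exact: S_ub]. Qed.
Let T_ne : T !=set0. Proof. by exists (sup (S 0)); exists 0%N. Qed.
Let sup_ge m n : (m <= n)%N -> u n <= sup (S m).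
Proof. by move=> mn; apply: ub_le_sup => //; exists n. Qed.
Let T_lb : has_lbound T.
Proof.
exists 0 => _ [m _ <-]; apply: le_trans (u0 m) _; exact: sup_ge.
Qed.
Let T_inf : has_inf T. Proof. by split; [exact: T_ne | exact: T_lb]. Qed.

Lemma LS_le m0 b : (forall n, (m0 <= n)%N -> u n <= b) -> LS u <= b.
Proof.
move=> H; apply: (@le_trans _ _ (sup (S m0))).
  by apply: ge_inf => //; exists m0.
by apply: ge_sup => // _ [k /= hk <-]; exact: H.
Qed.

Lemma LS_ge b : (forall m, exists n, (m <= n)%N /\ b <= u n) -> b <= LS u.
Proof.
move=> H; apply: lb_le_inf => // _ [m _ <-].
by have [n [mn bn]] := H m; apply: le_trans bn _; exact: sup_ge.
Qed.

Lemma LS_ev e : 0 < e -> exists m, forall n, (m <= n)%N -> u n <= LS u + e.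
Proof.
move=> e0; have [_ [m _ <-] hm] := inf_adherent e0 T_inf.
exists m => n mn; apply: le_trans (ltW hm); exact: sup_ge.
Qed.

Lemma LS_fr e : 0 < e -> forall m, exists n, (m <= n)%N /\ LS u - e <= u n.
Proof.
move=> e0 m; have [_ [n /= mn <-] hn] := sup_adherent e0 (S_sup m).
exists n; split => //; apply: le_trans (ltW hn); rewrite lerD2r.
by apply: ge_inf => //; exists m.
Qed.

Lemma LS_ge0 : 0 <= LS u.
Proof. by apply: LS_ge => m; exists m; split. Qed.

End LSlemmas.
End RealAux.
Arguments LS {R}.
Arguments le_eps {R}.
Arguments le_c {R}.
Arguments ev_small {R}.
Arguments sqrt_split {R C1}.
Arguments LS_le {R u B}.
Arguments LS_ge {R u B}.
Arguments LS_ev {R u B}.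
Arguments LS_fr {R u B}.
Arguments LS_ge0 {R u B}.
Section IntBounds.
Local Open Scope ereal_scope.
Context d0 (T : measurableType d0) (R : realType) (mu : {measure set T -> \bar R}).
Variables (D : set T) (mD : measurable D) (f : T -> R).
Hypothesis f0 : forall x, (0 <= f x)%R.

Import HBNNSimple.

Let sint_c (c : R) (c0 : (0 <= c)%R) :
  sintegral mu (scale_nnsfun (indic_nnsfun R mD) c0) = c%:E * mu D.
Proof.
rewrite -integralT_nnsfun -integral_cst //.
rewrite [RHS]integral_mkcond; apply: eq_integral => x _ /=.
by rewrite patchE measurable_realfun.mindicE; case: (x \in D) => /=; rewrite ?mulr1 ?mulr0.
Qed.

Lemma int_lb (c : R) : (0 <= c)%R -> (forall x, D x -> c <= f x)%R ->
  c%:E * mu D <= \int[mu]_(x in D) (f x)%:E.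
Proof.
move=> c0 hc; rewrite integral_mkcond ge0_integralTE; last first.
  by move=> x; rewrite patchE; case: ifP => // _; rewrite lee_fin.
apply: ereal_sup_ubound; exists (scale_nnsfun (indic_nnsfun R mD) c0); last exact: sint_c.
move=> x /=; rewrite patchE measurable_realfun.mindicE; case: ifP => /=.
  by rewrite inE => Dx; rewrite mulr1 lee_fin hc.
by rewrite mulr0.
Qed.

Lemma int_ub (c : R) : (0 <= c)%R -> (forall x, D x -> f x <= c)%R ->
  \int[mu]_(x in D) (f x)%:E <= c%:E * mu D.
Proof.
move=> c0 hc; rewrite integral_mkcond ge0_integralTE; last first.
  by move=> x; rewrite patchE; case: ifP => // _; rewrite lee_fin.
apply: ge_ereal_sup => _ [h hh <-]; rewrite -(sint_c c c0).
apply: le_sintegral => x /=; have := hh x; rewrite patchE measurable_realfun.mindicE.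
case: ifP => /=.
  by rewrite inE => Dx; rewrite mulr1 lee_fin => /le_trans; apply; exact: hc.
by rewrite mulr0 lee_fin.
Qed.
End IntBounds.
Section UMeas.
Variables (R : realType) (K : nzRingType) (absK : K -> R).

Lemma ball_meas (r : R) : measurable [set z : Kmeas absK | absK z < r].
Proof.
apply: sub_sigma_algebra; exists 0, r; apply/seteqP; split => z /=; by rewrite subr0.
Qed.

Lemma U_meas : measurable ((@Uset R K absK)).
Proof.
have -> : (@Uset R K absK) = ~` [set z : Kmeas absK | absK z < 1] `&`
   \bigcap_k [set z : Kmeas absK | absK z < 1 + k.+1%:R^-1].
  apply/seteqP; split => z /=.
  - rewrite /Uset /= => hz; split; first by rewrite hz ltxx.
    move=> k _ /=; rewrite hz ltrDl invr_gt0 ltr0Sn //.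
  - move=> [h1 h2]; rewrite /Uset /=.
    have a1 : 1 <= absK z by rewrite leNgt; apply/negP.
    apply/eqP; rewrite eq_le a1 andbT leNgt; apply/negP => a2.
    have a3 : 0 < absK z - 1 by rewrite subr_gt0.
    set k := Num.truncn ((absK z - 1)^-1).
    have hk := truncnS_gt ((absK z - 1)^-1); rewrite -/k in hk.
    have hk' : k.+1%:R^-1 < absK z - 1.
      by rewrite -[X in _ < X]invrK ltf_pV2 ?posrE ?invr_gt0 ?ltr0Sn.
    have h3 := h2 k Logic.I; move: hk' h3 => /=.
    move: (k.+1%:R^-1 : R) => t p q.
    have : absK z < absK z by lra.
    by rewrite ltxx.
apply: measurableI; first by apply: measurableC; exact: ball_meas.
by apply: bigcapT_measurable => k; exact: ball_meas.
Qed.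
End UMeas.

Section Gen.
Variables (R : realType) (K : nzRingType) (absK : K -> R).
Hypothesis habs_ge0 : forall a, 0 <= absK a.
Hypothesis habsn : forall (n : nat) (u : K), absK (n%:R * u) = n%:R * absK u.
Hypothesis habsN1 : absK (-1) = 1.
Hypothesis habs1 : absK 1 = 1.

Lemma absK0 : absK 0 = 0.
Proof. by have := habsn 0 1; rewrite mul0r mul0r. Qed.
Lemma absKn n : absK n%:R = n%:R.
Proof. by have := habsn n 1; rewrite mulr1 habs1 mulr1. Qed.

Section OnE.
Variables (E : lmodType K) (d : E -> E -> R).
Hypothesis hd : is_distance d.

Lemma d_xx x : d x x = 0. Proof. by case: hd => /(_ x x) [_ ->]. Qed.
Lemma d_sym x y : d x y = d y x. Proof. by case: hd => _ []. Qed.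
Lemma d_tri x y z : d x z <= d x y + d y z. Proof. by case: hd => _ [] _. Qed.
Lemma d_ge0 x y : 0 <= d x y.
Proof. have := d_tri x y x; rewrite d_xx (d_sym y x); lra. Qed.

Section Norm.
Variable N : E -> R.
Hypothesis hN : is_norm absK N.

Lemma NZ a x : N (a *: x) = absK a * N x. Proof. by case: hN => _ []. Qed.
Lemma NT x y : N (x + y) <= N x + N y. Proof. by case: hN => _ []. Qed.
Lemma N0 : N 0 = 0. Proof. by rewrite -(scale0r 0) NZ absK0 mul0r. Qed.
Lemma NN x : N (- x) = N x. Proof. by rewrite -scaleN1r NZ habsN1 mul1r. Qed.
Lemma N_ge0 x : 0 <= N x.
Proof. have := NT x (- x); rewrite subrr N0 NN; lra. Qed.
Lemma Nn n x : N (n%:R *: x) = n%:R * N x. Proof. by rewrite NZ absKn. Qed.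
Lemma Nsum n (f : 'I_n -> E) : N (\sum_(i < n) f i) <= \sum_(i < n) N (f i).
Proof.
elim: n f => [|n IH] f; first by rewrite !big_ord0 N0.
rewrite !big_ord_recr /=; apply: le_trans (NT _ _) _; rewrite lerD2r; exact: IH.
Qed.
End Norm.


Lemma mul_inv_le (c X Y : R) : 0 < c -> c^-1 * X <= Y -> X <= c * Y.
Proof.
move=> c0 h; have -> : X = c * (c^-1 * X) by rewrite mulrA mulfV ?gt_eqF // mul1r.
by rewrite ler_wpM2l // ltW.
Qed.

Section OnlyIf.
Variable N : E -> R.
Hypothesis hN : is_norm absK N.
Hypothesis hiso : asymp_isometric_to_norm d N.

Lemma only_if_am : asymp_multiplicative absK d.
Proof.
move=> C1 C11; have [c [c1 cc]] := sqrt_split C11.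
have [C [C0 H]] := hiso c c1.
exists (C1 * C), C; split; first by apply: mulr_ge0 => //; lra.
split => // l x y.
have c0 : 0 < c by lra.
set A := absK l; set D := d x y; set M := N (x - y).
have A0 : 0 <= A := habs_ge0 l.
have D0 : 0 <= D := d_ge0 x y.
have M0 : 0 <= M := N_ge0 N hN (x - y).
have [h1 h2] := H (l *: x) (l *: y).
rewrite -scalerBr (NZ N hN) -/A -/M in h1 h2.
have [h3 h4] := H x y; rewrite -/M -/D in h3 h4.
set ci := c^-1 in h1 h3.
have cci : c * ci = 1 by rewrite mulfV ?gt_eqF.
have ci0 : 0 < ci by rewrite invr_gt0.
have C1i : C1^-1 = ci * ci by rewrite -cc invfM.
rewrite C1i.
have hM : M <= c * (D + C) by apply: mul_inv_le => //; rewrite -/ci; lra.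
have hM' : ci * (D - C) <= M.
  have -> : M = ci * (c * M) by rewrite mulrA [ci * c]mulrC cci mul1r.
  rewrite ler_wpM2l //; [lra|lra].
split.
- have e1 : ci * A * (ci * (D - C)) <= ci * A * M by apply: ler_wpM2l => //; nra.
  have e2 : ci * ci * C <= C1 * C.
    rewrite ler_wpM2r // -C1i; apply: (@le_trans _ _ 1); last lra.
    rewrite invf_le1; lra.
  nra.
- have e1 : c * A * M <= c * A * (c * (D + C)) by apply: ler_wpM2l => //; nra.
  nra.
Qed.

Lemma only_if_ub : unbounded_on_subspaces d.
Proof.
move=> V [V0 VS] [v [Vv v0]] M.
have Nv0 : 0 < N v.
  rewrite lt_def N_ge0 // andbT; apply/eqP => h; apply: v0.
  by case: hN => /(_ v h).
have [C [C0 H]] := hiso (2 : R) (ltr_nat R 1 2).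
set n := Num.truncn ((M + C) * 2 / N v).
have hn := truncnS_gt ((M + C) * 2 / N v); rewrite -/n in hn.
exists (n.+1%:R *: v), 0; split; first by have := VS n.+1%:R v 0 Vv V0; rewrite addr0.
split => //.
have [h _] := H (n.+1%:R *: v) 0; rewrite subr0 Nn // in h.
apply: lt_le_trans h.
rewrite ltr_pdivrMr // in hn.
have i2 : (2 : R)^-1 = 1 / 2 by rewrite div1r.
rewrite i2; lra.
Qed.

Lemma only_if_sum : sum_condition d.
Proof.
move=> C1 C11; have [c [c1 cc]] := sqrt_split C11.
have [C [C0 H]] := hiso c c1.
exists (C1 * C + C); split; first by apply: addr_ge0 => //; apply: mulr_ge0 => //; lra.
move=> n n2 x y.
have [_ h] := H (\sum_(i < n) x i) (\sum_(i < n) y i).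
apply: le_trans h _.
rewrite -sumrB.
have hs := @Nsum N hN n (fun i => x i - y i).
have hi : forall i, N (x i - y i) <= c * (d (x i) (y i) + C).
  move=> i; have [h1 _] := H (x i) (y i); apply: mul_inv_le; lra.
have hs2 : \sum_(i < n) N (x i - y i) <= \sum_(i < n) (c * (d (x i) (y i) + C)).
  by apply: ler_sum => i _; exact: hi.
rewrite -mulr_sumr big_split /= sumr_const card_ord -mulr_natr in hs2.
set S := \sum_(i < n) d (x i) (y i) in hs2 *.
have S0 : 0 <= S by apply: sumr_ge0 => i _; exact: d_ge0.
have n1 : 1 <= (n%:R : R) by rewrite ler1n; apply: leq_trans n2.
have e1 : c * N (\sum_(i < n) (x i - y i)) <= c * (c * S + c * C * n%:R).
  by apply: ler_wpM2l; lra.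
have e2 : C <= n%:R * C by rewrite -[X in X <= _]mul1r ler_wpM2r.
nra.
Qed.


Section Haar.
Variable mu : probability (Kmeas absK) R.
Hypothesis mU1 : mu (@Uset R K absK) = 1%E.

Lemma I_bounds x c : 1 < c -> exists C : R, 0 <= C /\ forall n : nat,
  ((Num.max 0 (c^-1 * (n%:R * N x) - C))%:E <=
     \int[mu]_(u in @Uset R K absK) (d ((n%:R * (u : K)) *: x) 0)%:E)%E /\
  (\int[mu]_(u in @Uset R K absK) (d ((n%:R * (u : K)) *: x) 0)%:E <=
     (c * (n%:R * N x) + C)%:E)%E.
Proof.
move=> c1; have [C [C0 H]] := hiso c c1; exists C; split => // n.
have hu : forall u : Kmeas absK, @Uset R K absK u ->
    N ((n%:R * (u : K)) *: x - 0) = n%:R * N x.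
  by move=> u Uu; rewrite subr0 NZ // habsn Uu mulr1.
have f0 : forall u : Kmeas absK, 0 <= d ((n%:R * (u : K)) *: x) 0 by move=> u; exact: d_ge0.
split.
- rewrite -[X in (X <= _)%E]mule1 -mU1.
  apply: (@int_lb _ _ _ mu _ (@U_meas R K absK) _ f0); first by rewrite le_max lexx.
  move=> u Uu; rewrite ge_max d_ge0 /=.
  by have [h _] := H ((n%:R * (u : K)) *: x) 0; rewrite hu // in h.
- rewrite -[X in (_ <= X)%E]mule1 -mU1.
  apply: (@int_ub _ _ _ mu _ (@U_meas R K absK) _ f0).
    by apply: addr_ge0 => //; apply: mulr_ge0; [lra | apply: mulr_ge0 => //; exact: N_ge0].
  move=> u Uu.
  by have [_ h] := H ((n%:R * (u : K)) *: x) 0; rewrite hu // in h.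
Qed.


Lemma haar_part : haar_limit d mu N.
Proof.
move=> x.
have Nx0 := N_ge0 N hN x.
set I := fun n : nat => (\int[mu]_(u in @Uset R K absK) (d ((n%:R * (u : K)) *: x) 0)%:E)%E.
have fin : forall n, I n \is a fin_num.
  move=> n; have [C [_ H]] := I_bounds x 2 (ltr_nat R 1 2); have [h1 h2] := H n.
  rewrite -/(I n) in h1 h2.
  rewrite fin_numE; apply/andP; split; apply/eqP => h; rewrite h in h1 h2 => //.
apply: cvg_EFin.
  by apply: nearW => n; apply: fin_numM; [|exact: fin].
apply/cvgrPdist_le => e e0.
set w := (2 * (N x + 1))^-1.
have w0 : 0 < w by rewrite invr_gt0; lra.
have ww : w * (2 * (N x + 1)) = 1 by rewrite mulVf //; apply/lt0r_neq0; lra.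
set c := 1 + e * w.
have c1 : 1 < c by rewrite /c ltrDl mulr_gt0.
have [C [C0 H]] := I_bounds x c c1.
have e20 : 0 < e / 2 by lra.
have [m hm] := ev_small _ _ C0 e20.
exists m.+1 => // n /= hn.
case: n hn => // k hk.
have hk' : (m <= k)%N by [].
have := hm k hk'; set ni := k.+1%:R^-1 => hC.
rewrite (fineM _ (fin k.+1)) //= -/ni.
set J := fine (I k.+1).
have IJ : I k.+1 = J%:E by rewrite fineK.
have [h1 h2] := H k.+1; rewrite -/(I k.+1) IJ !lee_fin in h1 h2.
rewrite ge_max in h1; move/andP: h1 => [_ h1].
set nr := (k.+1%:R : R) in h1 h2 ni hC *.
have nr0 : 0 < nr by rewrite /nr ltr0Sn.
have nni : nr * ni = 1 by rewrite /ni mulfV // gt_eqF.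
have ni0 : 0 < ni by rewrite /ni invr_gt0.
set ci := c^-1 in h1 *.
have c0 : 0 < c by lra.
have cci : c * ci = 1 by rewrite /ci mulfV // gt_eqF.
have ci0 : 0 < ci by rewrite /ci invr_gt0.
have hci : 2 - c <= ci.
  have : 0 <= ci * ((c - 1) * (c - 1)) by apply: mulr_ge0; [lra | nra].
  nra.
have a1 : ni * J <= c * N x + C * ni.
  have : ni * J <= ni * (c * (nr * N x) + C) by apply: ler_wpM2l; lra.
  have -> : ni * (c * (nr * N x) + C) = c * N x * (nr * ni) + C * ni by ring.
  by rewrite nni mulr1.
have a2 : ci * N x - C * ni <= ni * J.
  have : ni * (ci * (nr * N x) - C) <= ni * J by apply: ler_wpM2l; lra.
  have -> : ni * (ci * (nr * N x) - C) = ci * N x * (nr * ni) - C * ni by ring.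
  by rewrite nni mulr1.
have hw : e * w * N x <= e / 2.
  have : e * w * N x <= e * w * (N x + 1) by apply: ler_wpM2l; [nra | lra].
  have -> : e * w * (N x + 1) = e / 2 * (w * (2 * (N x + 1))) by rewrite /w; field; lra.
  by rewrite ww mulr1.
have hC' := hC.
rewrite ler_norml; apply/andP; split.
- have hc : c * N x = N x + e * w * N x by rewrite /c; ring.
  rewrite hc in a1; move: a1 hw hC'.
  move: (e * w * N x) (C * ni) (ni * J) (N x) => p q r s.
  move=> *; lra.
- have h3 : (2 - c) * N x <= ci * N x by apply: ler_wpM2r.
  have hc : (2 - c) * N x = N x - e * w * N x by rewrite /c; ring.
  rewrite hc in h3; move: a2 h3 hw hC'.
  move: (e * w * N x) (C * ni) (ni * J) (N x) (ci * N x) => p q r s t.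
  move=> *; lra.
Qed.

End Haar.

End OnlyIf.


Section IfDir.
Hypothesis ham : asymp_multiplicative absK d.
Hypothesis hub : unbounded_on_subspaces d.
Hypothesis hsc : sum_condition d.

Lemma sc2 c : 1 < c -> exists C0 : R, 0 <= C0 /\ forall a b a' b' : E,
  d (a + b) (a' + b') <= c * (d a a' + d b b') + 2 * C0.
Proof.
move=> c1; have [C0 [C00 H]] := hsc c c1; exists C0; split => // a b a' b'.
have := H 2%N (leqnn 2) (fun i => if val i == 0%N then a else b)
  (fun i => if val i == 0%N then a' else b').
by rewrite !big_ord_recl !big_ord0 /= !addr0.
Qed.

Definition g x n := d (n.+1%:R *: x) 0 / n.+1%:R.
Definition Nd x := LS (g x).

Lemma g_bounds c : 1 < c -> exists C : R, 0 <= C /\ forall x n,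
  c^-1 * d x 0 - C <= g x n /\ g x n <= c * d x 0 + C.
Proof.
move=> c1; have [C2 [C3 [C20 [C30 H]]]] := ham c c1.
exists (C2 + C3); split; first lra.
move=> x n; have [h1 h2] := H n.+1%:R x 0.
rewrite scaler0 absKn in h1 h2.
set Dm := d (n.+1%:R *: x) 0 in h1 h2 *.
set m := (n.+1%:R : R) in h1 h2 *.
have m1 : 1 <= m by rewrite /m ler1n.
have m0 : 0 < m by lra.
set D := d x 0 in h1 h2 *.
rewrite /g -/m -/Dm; split.
- rewrite ler_pdivlMr //.
  have e : C3 <= C3 * m by rewrite -[X in X <= _]mulr1 ler_wpM2l.
  nra.
- rewrite ler_pdivrMr //.
  have e : C3 <= C3 * m by rewrite -[X in X <= _]mulr1 ler_wpM2l.
  nra.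
Qed.

Lemma g_ge0 x n : 0 <= g x n.
Proof. by rewrite /g divr_ge0 // d_ge0. Qed.

Lemma g_bnd x : exists B, forall n, g x n <= B.
Proof.
have [C [_ H]] := g_bounds 2 (ltr_nat R 1 2).
by exists (2 * d x 0 + C) => n; have [_ ->] := H x n.
Qed.

Lemma Nd_ge0 x : 0 <= Nd x.
Proof. have [B hB] := g_bnd x; exact: (LS_ge0 (B:=B) (g_ge0 x) hB). Qed.


Lemma Nd_le x m0 b : (forall n, (m0 <= n)%N -> g x n <= b) -> Nd x <= b.
Proof. have [B hB] := g_bnd x; exact: (LS_le (g_ge0 x) hB). Qed.
Lemma Nd_ge x b : (forall m, exists n, (m <= n)%N /\ b <= g x n) -> b <= Nd x.
Proof. have [B hB] := g_bnd x; exact: (LS_ge hB). Qed.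
Lemma Nd_ev x e : 0 < e -> exists m, forall n, (m <= n)%N -> g x n <= Nd x + e.
Proof. have [B hB] := g_bnd x; exact: (LS_ev (g_ge0 x) hB). Qed.
Lemma Nd_fr x e : 0 < e -> forall m, exists n, (m <= n)%N /\ Nd x - e <= g x n.
Proof. have [B hB] := g_bnd x; exact: (LS_fr (g_ge0 x) hB). Qed.

Lemma Nd_d c : 1 < c -> exists C : R, 0 <= C /\ forall z,
  Nd z <= c * d z 0 + C /\ c^-1 * d z 0 - C <= Nd z.
Proof.
move=> c1; have [C [C0 H]] := g_bounds c c1; exists C; split => // z; split.
- by apply: (@Nd_le z 0%N) => n _; have [_ ->] := H z n.
- by apply: Nd_ge => m; exists m; split => //; have [-> _] := H z m.
Qed.

Lemma iso_if : asymp_isometric_to_norm d Nd.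
Proof.
move=> C1 C11; have [c [c1 cc]] := sqrt_split C11.
have [C [C0 H]] := Nd_d c c1.
have [C0' [C0'0 H2]] := sc2 c c1.
have c0 : 0 < c by lra.
exists (C1 * C + 2 * C0' + 2 * c * C0' + C); split.
  have : 0 <= C1 * C by apply: mulr_ge0 => //; lra.
  have : 0 <= c * C0' by apply: mulr_ge0 => //; lra.
  lra.
move=> x y; set z := x - y.
have t1 : d x y <= c * d z 0 + 2 * C0'.
  have := H2 z y 0 y; rewrite /z subrK add0r d_xx addr0; lra.
have t2 : d z 0 <= c * d x y + 2 * C0'.
  have := H2 x (- y) y (- y); rewrite subrr d_xx addr0.
  by rewrite /z.
have [n1 n2] := H z.
have Dz : d z 0 <= c * (Nd z + C) by apply: mul_inv_le => //; lra.
have Nz0 := Nd_ge0 z.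
have dxy0 := d_ge0 x y.
have Dz0 := d_ge0 z 0.
set ci := C1^-1.
have C1ci : C1 * ci = 1 by rewrite mulfV // gt_eqF //; lra.
have ci0 : 0 < ci by rewrite invr_gt0; lra.
have ci1 : ci <= 1 by rewrite /ci invf_le1; lra.
split.
- have e1 : c * d z 0 <= c * (c * (Nd z + C)) by apply: ler_wpM2l; lra.
  have e2 : Nd z <= C1 * d x y + 2 * c * C0' + C.
    have e3 : c * d z 0 <= c * (c * d x y + 2 * C0') by apply: ler_wpM2l; lra.
    nra.
  have e4 : ci * Nd z <= ci * (C1 * d x y + 2 * c * C0' + C) by apply: ler_wpM2l; lra.
  have e5 : ci * (2 * c * C0' + C) <= 2 * c * C0' + C.
    rewrite -[X in _ <= X]mul1r ler_wpM2r //.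
    have : 0 <= c * C0' by apply: mulr_ge0; lra.
    lra.
  have e6 : 0 <= C1 * C by apply: mulr_ge0; lra.
  have e7 : ci * (C1 * d x y) = d x y by rewrite mulrA [ci * C1]mulrC C1ci mul1r.
  nra.
- have e1 : c * d z 0 <= c * (c * (Nd z + C)) by apply: ler_wpM2l; lra.
  have e6 : 0 <= c * C0' by apply: mulr_ge0; lra.
  nra.
Qed.


Lemma ev_max (P Q : nat -> Prop) :
  (exists m, forall n, (m <= n)%N -> P n) -> (exists m, forall n, (m <= n)%N -> Q n) ->
  exists m, forall n, (m <= n)%N -> P n /\ Q n.
Proof.
move=> [m1 h1] [m2 h2]; exists (maxn m1 m2) => n; rewrite geq_max => /andP[a b].
by split; [exact: h1|exact: h2].
Qed.

Lemma g_scale c : 1 < c -> exists Ca : R -> R, (forall A, 0 <= A -> 0 <= Ca A) /\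
  forall (a : K) x n,
  c^-1 * absK a * g x n - Ca (absK a) / n.+1%:R <= g (a *: x) n /\
  g (a *: x) n <= c * absK a * g x n + Ca (absK a) / n.+1%:R.
Proof.
move=> c1; have [C2 [C3 [C20 [C30 H]]]] := ham c c1.
exists (fun A => C2 * A + C3); split.
  by move=> A A0; apply: addr_ge0 => //; apply: mulr_ge0.
move=> a x n; have [h1 h2] := H a (n.+1%:R *: x) 0.
rewrite scaler0 scalerA commr_nat -scalerA in h1 h2.
rewrite /g.
set m := (n.+1%:R : R).
have m0 : 0 < m by rewrite /m ltr0Sn.
set A := absK a in h1 h2 *.
set D1 := d (n.+1%:R *: x) 0 in h1 h2 *.
set D2 := d (a *: (n.+1%:R *: x)) 0 in h1 h2 *.
have mi : 0 <= m^-1 by rewrite invr_ge0 ltW.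
rewrite !mulrA -mulrBl -mulrDl; split; apply: ler_wpM2r => //; lra.
Qed.

Lemma Nd_hom (a : K) x : Nd (a *: x) = absK a * Nd x.
Proof.
have A0 := habs_ge0 a; set A := absK a in A0 *.
have N0 := Nd_ge0 x.
apply/eqP; rewrite eq_le; apply/andP; split.
- apply: le_c; first exact: mulr_ge0.
  move=> c c1; have [Ca [Ca0 H]] := g_scale c c1.
  have c0 : 0 < c by lra.
  apply: (le_eps _ _ (c * A + 1)); first by have := mulr_ge0 (ltW c0) A0; lra.
  move=> e e0.
  have [m hm] := ev_max _ _ (Nd_ev x e e0) (ev_small _ _ (Ca0 A A0) e0).
  apply: (@Nd_le _ m) => n /hm [h1 h2].
  have [_ h3] := H a x n; rewrite -/A in h3.
  apply: le_trans h3 _.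
  have : c * A * g x n <= c * A * (Nd x + e) by apply: ler_wpM2l => //; exact: mulr_ge0 (ltW c0) A0.
  have -> : c * (A * Nd x) + (c * A + 1) * e = c * A * (Nd x + e) + e by ring.
  by move=> h; apply: (le_trans (lerD h h2)).  
- rewrite mulrC; apply: le_c; first exact: Nd_ge0.
  move=> c c1; have [Ca [Ca0 H]] := g_scale c c1.
  have c0 : 0 < c by lra.
  rewrite mulrC; apply: mul_inv_le => //.
  have ci0 : 0 <= c^-1 by rewrite invr_ge0 ltW.
  apply: (le_eps _ _ (c^-1 * A + 1)); first by have := mulr_ge0 ci0 A0; lra.
  move=> e e0.
  have [m2 hm2] := ev_small _ _ (Ca0 A A0) e0.
  suff : c^-1 * A * (Nd x - e) - e <= Nd (a *: x).
    by rewrite mulrBr mulrA; set ci := c^-1; lra.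
  apply: Nd_ge => m; have [n [mn hn]] := Nd_fr x e e0 (maxn m m2).
  move: mn; rewrite geq_max => /andP[mn m2n].
  exists n; split => //.
  have [h3 _] := H a x n; rewrite -/A in h3.
  apply: le_trans h3.
  have := hm2 n m2n.
  have : c^-1 * A * (Nd x - e) <= c^-1 * A * g x n by apply: ler_wpM2l => //; exact: mulr_ge0.
  set ci := c^-1; set t := Ca A / n.+1%:R; lra.
Qed.

Lemma Nd_tri x y : Nd (x + y) <= Nd x + Nd y.
Proof.
have Nx0 := Nd_ge0 x; have Ny0 := Nd_ge0 y.
apply: le_c; first lra.
move=> c c1; have [C0 [C00 H]] := sc2 c c1.
have c0 : 0 < c by lra.
apply: (le_eps _ _ (2 * c + 1)); first lra.
move=> e e0.
have C0e : 0 <= 2 * C0 by lra.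
have [m hm] := ev_max _ _ (ev_max _ _ (Nd_ev x e e0) (Nd_ev y e e0)) (ev_small _ _ C0e e0).
apply: (@Nd_le _ m) => n /hm [[h1 h2] h3].
have := H (n.+1%:R *: x) (n.+1%:R *: y) 0 0.
rewrite -scalerDr addr0 => h.
rewrite /g.
set m' := (n.+1%:R : R) in h3 *.
have m0 : 0 < m' by rewrite /m' ltr0Sn.
rewrite ler_pdivrMr //.
move: h1 h2; rewrite /g -/m' !ler_pdivrMr // => h1 h2.
have e1 : c * (d (n.+1%:R *: x) 0 + d (n.+1%:R *: y) 0) <= c * ((Nd x + e) * m' + (Nd y + e) * m')
  by apply: ler_wpM2l; lra.
move: h3; rewrite ler_pdivrMr // => h3.
nra.
Qed.

Lemma Nd_def x : Nd x = 0 -> x = 0.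
Proof.
move=> Nx; have [//|x0] := eqVneq x 0; exfalso; move/eqP: x0 => x0.
have [C [C0 H]] := iso_if 2 (ltr_nat R 1 2).
pose V := [set y : E | exists a : K, y = a *: x].
have sV : is_subspace V.
  split; first by exists 0; rewrite scale0r.
  move=> a _ _ [b ->] [b' ->]; exists (a * b + b').
  by rewrite scalerDl scalerA.
have [p [q [[a ->] [[b ->] hpq]]]] := hub V sV (ex_intro _ x (conj (ex_intro _ 1 (esym (scale1r x))) x0)) (2 * C).
have hb y : V y -> d y 0 <= C.
  move=> [a' ->]; have [_ h] := H (a' *: x) 0; rewrite subr0 Nd_hom Nx mulr0 mulr0 add0r in h.
  exact: h.
have := d_tri (a *: x) 0 (b *: x); rewrite (d_sym 0).
have := hb (a *: x) (ex_intro _ a erefl); have := hb (b *: x) (ex_intro _ b erefl).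
lra.
Qed.

Lemma if_dir : exists N : E -> R, is_norm absK N /\ asymp_isometric_to_norm d N.
Proof.
exists Nd; split; last exact: iso_if.
split; first exact: Nd_def.
split; [exact: Nd_hom | exact: Nd_tri].
Qed.

End IfDir.

End OnE.

Lemma thm_gen : theorem3_for absK.
Proof.
move=> E d [hd _]; split.
- split.
  + move=> [N [hN hiso]]; split.
    * exact: (only_if_am _ _ hd _ hN hiso).
    * exact: (only_if_ub _ _ _ hN hiso).
    * exact: (only_if_sum _ _ hd _ hN hiso).
  + by move=> [ham hub hsc]; exact: (if_dir _ _ hd ham hub hsc).
- move=> ham hub hsc mu [mU1 _].
  have [N [hN hiso]] := if_dir _ _ hd ham hub hsc.
  exists N; split => //; exact: (haar_part _ _ hd _ hN hiso _ mU1).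
Qed.

End Gen.

Section Q.
Variable R : realType.
Lemma quat_nat (n : nat) : (n%:R : quat R) = Quat n%:R 0 0 0.
Proof.
elim: n => [|n IH]; first by [].
rewrite -[n.+1]addn1 natrD IH /= /GRing.add /= /qadd /= natrD.
congr Quat; rewrite ?addr0 //.
Qed.
Lemma cnat (n : nat) : (n%:R : R[i]) = (n%:R +i* 0)%C.
Proof.
elim: n => [|n IH]; first by [].
rewrite -[n.+1]addn1 natrD IH /=.
apply/eqP; rewrite eq_complex /= natrD !addr0 !eqxx //.
Qed.
End Q.

Section Q2.
Variable R : realType.
Lemma sqrt_n (n : nat) (X : R) : Num.sqrt (n%:R ^+ 2 * X) = n%:R * Num.sqrt X.
Proof. by rewrite sqrtrM ?sqr_ge0 // sqrtr_sqr normr_nat. Qed.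

Lemma cabs_ge0 (u : R[i]) : 0 <= cabs u. Proof. by case: u => a b; exact: sqrtr_ge0. Qed.
Lemma cabs_n (n : nat) (u : R[i]) : cabs (n%:R * u) = n%:R * cabs u.
Proof.
case: u => a b; rewrite cnat /cabs /= -sqrt_n; congr Num.sqrt; ring.
Qed.
Lemma cabsN1 : cabs (-1 : R[i]) = 1.
Proof. by rewrite /cabs /= -[X in _ = X]sqrtr1; congr Num.sqrt; ring. Qed.
Lemma cabs1 : cabs (1 : R[i]) = 1.
Proof. by rewrite /cabs /= -[X in _ = X]sqrtr1; congr Num.sqrt; ring. Qed.

Lemma qabs_ge0 (u : quat R) : 0 <= qabs u. Proof. exact: sqrtr_ge0. Qed.
Lemma qabs_n (n : nat) (u : quat R) : qabs (n%:R * u) = n%:R * qabs u.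
Proof.
case: u => a b c e; rewrite quat_nat /qabs /= -sqrt_n; congr Num.sqrt; ring.
Qed.
Lemma qabsN1 : qabs (-1 : quat R) = 1.
Proof. by rewrite /qabs /= -[X in _ = X]sqrtr1; congr Num.sqrt; ring. Qed.
Lemma qabs1 : qabs (1 : quat R) = 1.
Proof. by rewrite /qabs /= -[X in _ = X]sqrtr1; congr Num.sqrt; ring. Qed.
End Q2.

Local Close Scope classical_set_scope.

Theorem theorem3 (R : realType) :
  [/\ @theorem3_for R R (fun x : R => `|x|),
      @theorem3_for R R[i] (@cabs R) &
      @theorem3_for R (quat R) (@qabs R)].
Proof.
split.
- apply: (@thm_gen R R (fun x : R => `|x|)).
  + by move=> a; exact: normr_ge0.
  + by move=> n u; rewrite normrM normr_nat.
  + exact: normrN1.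
  + exact: normr1.
- apply: (@thm_gen R R[i] (@cabs R)).
  + exact: cabs_ge0.
  + exact: cabs_n.
  + exact: cabsN1.
  + exact: cabs1.
- apply: (@thm_gen R (quat R) (@qabs R)).
  + exact: qabs_ge0.
  + exact: qabs_n.
  + exact: qabsN1.
  + exact: qabs1.
Qed.
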